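(* Let $\mathcal{X}=\{1,\dots,n\}$ and $\pi$ a probability mass function on $\mathcal{X}$ with full support, ordered so that $\pi(1)\le\pi(2)\le\dots\le\pi(n)$. Fix $k\in\{1,\dots,n\}$ and let $(\mathcal{O}_i)_{i=1}^k$ be the partition with $\mathcal{O}_i=\{i\}$ for $1\le i\le k-1$ and $\mathcal{O}_k=\{k,k+1,\dots,n\}$. Then the Gibbs kernel $G_{\mathcal{O}}$ of $(\mathcal{O}_i)_{i=1}^k$ minimises $D^\pi_{KL}(G\|\Pi)$ among all Gibbs kernels with $k$ orbits: for any partition $(\mathcal{C}_i)_{i=1}^k$ of $\mathcal{X}$ into $k$ blocks, $D^\pi_{KL}(G_{\mathcal{O}}\|\Pi)\le D^\pi_{KL}(G_{\mathcal{C}}\|\Pi)$.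
   Context: For a partition $(\mathcal{C}_i)$ of $\mathcal{X}$ (the orbits of some group action), its Gibbs kernel is $G_{\mathcal{C}}(x,y)=\pi(y)/\pi(\mathcal{C}(x))$ if $y$ lies in the block $\mathcal{C}(x)$ containing $x$, and $0$ otherwise, where $\pi(A)=\sum_{z\in A}\pi(z)$. $\Pi$ is the matrix with all rows equal to $\pi$, and $D^\pi_{KL}(P\|Q)=\sum_{x,y}\pi(x)P(x,y)\log\frac{P(x,y)}{Q(x,y)}$ with $0\log(0/a)=0$. *)

(* Defs.v *)
From HB Require Import structures.
From mathcomp Require Import all_boot all_order all_algebra.
From mathcomp Require Import reals exp.
Set Implicit Arguments. Unset Strict Implicit. Unset Printing Implicit Defensive.
Import Order.TTheory GRing.Theory Num.Theory.
Local Open Scope ring_scope.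

Definition pimass (R : realType) (n : nat) (pi : 'I_n -> R) (A : {set 'I_n}) : R :=
  \sum_(z in A) pi z.

Definition gibbs_kernel (R : realType) (n : nat) (pi : 'I_n -> R)
  (P : {set {set 'I_n}}) (x y : 'I_n) : R :=
  if y \in pblock P x then pi y / pimass pi (pblock P x) else 0.

Definition Pi_kernel (R : realType) (n : nat) (pi : 'I_n -> R) (x y : 'I_n) : R := pi y.

Definition DKL (R : realType) (n : nat) (pi : 'I_n -> R) (P Q : 'I_n -> 'I_n -> R) : R :=
  \sum_(x : 'I_n) \sum_(y : 'I_n)
     (if P x y == 0 then 0 else pi x * P x y * ln (P x y / Q x y)).

(* The partition O (0-indexed): singletons {x} for x < k-1, and the tail {x | k-1 <= x} *)
Definition O_partition (n k : nat) : {set {set 'I_n}} :=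
  [set [set x] | x : 'I_n & (x < k.-1)%N] :|: [set [set x : 'I_n | (k.-1 <= x)%N]].

(* Main.v *)
Require Import Defs.
From HB Require Import structures.
From mathcomp Require Import all_boot all_order all_algebra.
From mathcomp Require Import reals exp.
From mathcomp Require Import lra zify ring.
Import Order.TTheory GRing.Theory Num.Theory.
Local Open Scope ring_scope.

Section Phi.
Context {R : realType}.
Definition phi (t : R) := t * ln t.

Lemma ln_le_sub1 (t : R) : 0 < t -> ln t <= t - 1.
Proof.
move=> t0; have := @le_ln1Dx R (t - 1).
rewrite addrCA subrr addr0; apply; lra.
Qed.

Lemma phi_tangent {x y : R} : 0 < x -> 0 < y ->
  phi x + (y - x) * (ln x + 1) <= phi y.
Proof.
move=> x0 y0; rewrite /phi.
have h := @ln_le_sub1 (x / y) (divr_gt0 x0 y0).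
rewrite ln_div ?posrE // in h.
have h2 : y * (ln x - ln y) <= y * (x / y - 1) by rewrite ler_pM2l.
rewrite mulrBr mulrBr mulr1 mulrCA divff ?mulr1 ?gt_eqF // in h2.
nra.
Qed.

Lemma phi_exch {a b c : R} : 0 < c -> c <= a -> c <= b ->
  phi a + phi b <= phi c + phi (a + b - c).
Proof.
move=> c0 ca cb.
have a0 : 0 < a by lra. have b0 : 0 < b by lra.
have e0 : 0 < a + b - c by lra.
have [ab|ba] := lerP a b.
- have t1 := phi_tangent a0 c0. have t2 := phi_tangent b0 e0.
  have : ln a <= ln b by rewrite ler_ln ?posrE.
  move=> h; have : 0 <= (a - c) * (ln b - ln a) by apply: mulr_ge0; lra.
  nra.
- have t1 := phi_tangent b0 c0. have t2 := phi_tangent a0 e0.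
  have : ln b <= ln a by rewrite ler_ln ?posrE // ltW.
  move=> h; have : 0 <= (b - c) * (ln a - ln b) by apply: mulr_ge0; lra.
  nra.
Qed.
End Phi.

Section Main.
Variables (R : realType) (n : nat) (pi : 'I_n -> R).
Hypothesis pi_pos : forall x, 0 < pi x.
Hypothesis pi_mono : forall i j : 'I_n, (i <= j)%N -> pi i <= pi j.

Lemma pimassU (A B : {set 'I_n}) : [disjoint A & B] ->
  pimass pi (A :|: B) = pimass pi A + pimass pi B.
Proof.
move=> dAB; rewrite /pimass -bigU //; apply: eq_bigl => x; by rewrite !inE.
Qed.

Lemma pimassD1 {A : {set 'I_n}} {x} : x \in A ->
  pimass pi A = pi x + pimass pi (A :\ x).
Proof. by move=> xA; rewrite /pimass (big_setD1 x xA). Qed.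

Lemma pimass_ge0 A : 0 <= pimass pi A.
Proof. by apply: sumr_ge0 => x _; apply: ltW. Qed.

Lemma pimass_ge {A : {set 'I_n}} {x} : x \in A -> pi x <= pimass pi A.
Proof. by move=> xA; rewrite (pimassD1 xA) lerDl pimass_ge0. Qed.

Definition Sj j := [set x : 'I_n | (j <= x)%N].
Definition Fsum (C : {set {set 'I_n}}) := \sum_(B in C) phi (pimass pi B).
Definition RHS j k := \sum_(x : 'I_n | (j <= x < j + k)%N) phi (pi x)
   + phi (pimass pi (Sj (j + k))).

Lemma RHS_step j k (xj : 'I_n) : val xj = j -> RHS j k.+1 = phi (pi xj) + RHS j.+1 k.
Proof.
move=> hj; rewrite /RHS (bigD1 xj) /=; last by rewrite hj; lia.
rewrite addrA addSnnS; congr (_ + _ + _); apply: eq_bigl => z.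
rewrite -val_eqE hj /=; lia.
Qed.

Lemma main k : forall j C, partition C (Sj j) -> #|C| = k.+1 -> Fsum C <= RHS j k.
Proof.
elim: k => [|k IH] j C pC cC.
  have /cards1P [B CB] : #|C| == 1%N by rewrite cC.
  have := cover_partition pC; subst C; rewrite cover1 => BS.
  rewrite /Fsum /RHS big_set1 big_pred0; last by move=> z; lia.
  by rewrite add0r addn0 BS.
have Sne : Sj j != set0.
  apply/negP => /eqP S0; move: pC; rewrite S0 partition_set0 => /eqP C0.
  by move: cC; rewrite C0 cards0.
case/set0Pn: Sne => y; rewrite inE => jy.
have jn : (j < n)%N by have := ltn_ord y; lia.
pose xj := Ordinal jn.
have xjS : xj \in Sj j by rewrite inE.
have covC := cover_partition pC. have tC := partition_trivIset pC.
pose B0 := pblock C xj.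
have B0C : B0 \in C by rewrite pblock_mem // covC.
have xB0 : xj \in B0 by rewrite mem_pblock covC.
have SjD : Sj j :\ xj = Sj j.+1.
  by apply/setP=> z; rewrite !inE -val_eqE /=; lia.
have RS := @RHS_step j k xj erefl.
have [eB0|nB0] := eqVneq B0 [set xj].
  have p' := partitionD1 pC B0C; rewrite eB0 SjD in p'.
  have c' : #|C :\ [set xj]| = k.+1.
    by move: cC; rewrite (cardsD1 [set xj]) -eB0 B0C add1n => -[].
  have := IH _ _ p' c'.
  rewrite /Fsum (big_setD1 _ B0C) eB0 /pimass big_set1 /= RS -/(pimass _ _).
  by rewrite lerD2l.
have cD : #|C :\ B0| = k.+1 by move: cC; rewrite (cardsD1 B0) B0C add1n => -[].
have : C :\ B0 != set0 by rewrite -card_gt0 cD.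
case/set0Pn => B1 B1C'.
have B1C : B1 \in C by move: B1C'; rewrite !inE => /andP[].
have B10 : B1 != B0 by move: B1C'; rewrite !inE => /andP[].
have dB01 : [disjoint B0 & B1].
  by move/trivIsetP: tC => tC'; apply: tC' => //; rewrite eq_sym.
have sB0 := partitionS pC B0C. have sB1 := partitionS pC B1C.
have /set0Pn [y1 y1B1] := partition_neq0 pC B1C.
have xB1 : xj \notin B1.
  by apply/negP => h; move: dB01; rewrite -setI_eq0 => /eqP/setP/(_ xj); rewrite !inE xB0 h.
pose rest := C :\ B0 :\ B1.
pose nw := (B0 :\ xj) :|: B1.
pose C3 := nw |: rest.
have p2 := partitionD1 (partitionD1 pC B0C) B1C'.
have nw0 : nw != set0 by apply/set0Pn; exists y1; rewrite !inE y1B1 orbT.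
have dnw : [disjoint nw & (Sj j :\: B0 :\: B1)].
  rewrite -setI_eq0; apply/eqP/setP => z; rewrite !inE.
  by case: (z \in B0); case: (z \in B1); rewrite ?andbF ?orbF ?andbT.
have p3 := partitionU1 p2 nw0 dnw.
have eS : nw :|: (Sj j :\: B0 :\: B1) = Sj j.+1.
  rewrite -SjD; apply/setP => z; rewrite !inE.
  have h0 := subsetP sB0 z. have h1 := subsetP sB1 z.
  have [->|nz] := eqVneq z xj; first by rewrite (negbTE xB1) xB0.
  rewrite !inE in h0 h1.
  move: h0 h1; case: (z \in B0); case: (z \in B1); case: (j <= z)%N => //=;
   by [move=> /(_ isT) | move=> _ /(_ isT)].
rewrite eS in p3.
have nwr : nw \notin rest.
  apply/negP; rewrite !inE => /andP[nw1 /andP[_ nwC]].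
  have e1 := def_pblock tC nwC (_ : y1 \in nw).
  have e2 := def_pblock tC B1C y1B1.
  by move: nw1; rewrite -e1 ?e2 ?eqxx // !inE y1B1 orbT.
have c3 : #|C3| = k.+1.
  move: cD; rewrite (cardsD1 B1) B1C' cardsU1 nwr => -[] <-; done.
have := IH _ _ p3 c3.
have -> : Fsum C3 = phi (pimass pi nw) + Fsum rest by rewrite /Fsum big_setU1.
have -> : Fsum C = phi (pimass pi B0) + phi (pimass pi B1) + Fsum rest.
  by rewrite /Fsum (big_setD1 _ B0C) (big_setD1 _ B1C') /= addrA.
have enw : pimass pi nw = pimass pi B0 + pimass pi B1 - pi xj.
  rewrite pimassU; last first.
    rewrite -setI_eq0; apply/eqP/setP => z; move: dB01; rewrite -setI_eq0.
    move/eqP/setP/(_ z); rewrite !inE => h; apply/negbTE/negP.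
    by case/andP => /andP[_ a] b; rewrite a b in h.
  rewrite (pimassD1 xB0); lra.
have y1S : (j <= y1)%N by move: (subsetP sB1 y1 y1B1); rewrite inE.
have c1 : pi xj <= pimass pi B1.
  apply: (le_trans _ (pimass_ge y1B1)); exact: pi_mono.
have ex := phi_exch (pi_pos xj) (pimass_ge xB0) c1.
rewrite -enw in ex; rewrite RS => h; lra.
Qed.


Lemma DKL_part P : partition P [set: 'I_n] ->
  DKL pi (gibbs_kernel pi P) (Pi_kernel pi) = - Fsum P.
Proof.
move=> pP; have tP := partition_trivIset pP; have cP := cover_partition pP.
have inner x : \sum_(y : 'I_n) (if gibbs_kernel pi P x y == 0 then 0 else
     pi x * gibbs_kernel pi P x y * ln (gibbs_kernel pi P x y / Pi_kernel pi x y))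
   = - (pi x * ln (pimass pi (pblock P x))).
  have xB : x \in pblock P x by rewrite mem_pblock cP inE.
  set B := pblock P x in xB *.
  have m0 : 0 < pimass pi B by apply: lt_le_trans (pi_pos x) (pimass_ge xB).
  rewrite (bigID (mem B)) /= [X in _ + X]big1 ?addr0; last first.
    by move=> y /negbTE yB; rewrite /gibbs_kernel -/B yB eqxx.
  transitivity (\sum_(y in B) (pi x * (- ln (pimass pi B)) / pimass pi B) * pi y).
    apply: eq_bigr => y yB; rewrite /gibbs_kernel -/B yB /Pi_kernel.
    have py := pi_pos y.
    rewrite mulf_eq0 invr_eq0 (gt_eqF py) (gt_eqF m0) /=.
    have -> : pi y / pimass pi B / pi y = (pimass pi B)^-1.
      by field; rewrite (gt_eqF py) (gt_eqF m0).
    rewrite lnV ?posrE //; field; by rewrite gt_eqF.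
  rewrite -mulr_sumr -/(pimass pi B); field; by rewrite gt_eqF.
rewrite /DKL; under eq_bigr => x _ do rewrite inner.
rewrite (eq_bigl (fun x => x \in [set: 'I_n])); last by move=> x; rewrite inE.
rewrite (set_partition_big _ pP) /Fsum -sumrN; apply: eq_bigr => B BP.
rewrite /phi /pimass mulr_suml -sumrN; apply: eq_bigr => x xB.
by rewrite (def_pblock tP BP xB).
Qed.


Lemma O_part k : (1 <= k)%N -> (k <= n)%N ->
  partition (O_partition n k) [set: 'I_n] /\ Fsum (O_partition n k) = RHS 0 k.-1.
Proof.
move=> k1 kn.
pose D := [set x : 'I_n | (x < k.-1)%N].
pose I := [set [set x] | x : 'I_n & (x < k.-1)%N].
pose T := Sj k.-1.
have OE : O_partition n k = T |: I by rewrite /O_partition setUC.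
have kn' : (k.-1 < n)%N by lia.
have TT : Ordinal kn' \in T by rewrite inE.
have T0 : T != set0 by apply/set0Pn; exists (Ordinal kn').
have I0 : set0 \notin I.
  apply/imsetP => -[x _ /setP/(_ x)]; by rewrite !inE eqxx.
have pI : partition I D.
  apply/and3P; split => //.
  - apply/eqP/setP => z; rewrite cover_imset; apply/bigcupP/idP.
      by case=> x; rewrite !inE => xk /eqP ->.
    by rewrite inE => zk; exists z; rewrite !inE.
  - have [] := @trivIimset _ _ _ (fun x : 'I_n => [set x]) _ I0 => //.
    by move=> x y _ _ yx; rewrite disjoints1 inE eq_sym.
have dTD : [disjoint T & D].
  rewrite -setI_eq0; apply/eqP/setP => z; rewrite !inE; lia.
have pO := partitionU1 pI T0 dTD.
have TD : T :|: D = [set: 'I_n] by apply/setP => z; rewrite !inE; lia.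
rewrite TD -OE in pO; split => //.
have TI : T \notin I.
  apply/imsetP => -[x]; rewrite inE => xk /setP/(_ (Ordinal kn')).
  rewrite !inE leqnn => /esym/eqP eq; move: xk; rewrite -eq /=; lia.
rewrite OE /Fsum big_setU1 //= big_imset /=; last by move=> x y _ _; apply: set1_inj.
rewrite addrC /RHS add0n; congr (_ + _); apply: eq_big => x; first by rewrite inE; lia.
by move=> _; rewrite /pimass big_set1.
Qed.

End Main.

Theorem proposition7p1 (R : realType) (n : nat) (pi : 'I_n -> R)
  (pi_pos : forall x, 0 < pi x)
  (pi_sum : \sum_(x : 'I_n) pi x = 1)
  (pi_mono : forall i j : 'I_n, (i <= j)%N -> pi i <= pi j)
  (k : nat) (hk1 : (1 <= k)%N) (hkn : (k <= n)%N)
  (C : {set {set 'I_n}}) (hC : partition C [set: 'I_n]) (hCk : #|C| = k) :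
  DKL pi (gibbs_kernel pi (O_partition n k)) (Pi_kernel pi)
  <= DKL pi (gibbs_kernel pi C) (Pi_kernel pi).
Proof.
have [pO FO] := @O_part R n pi k hk1 hkn.
rewrite (@DKL_part R n pi pi_pos _ pO) (@DKL_part R n pi pi_pos _ hC) FO lerN2.
have SjT : @Sj n 0 = [set: 'I_n] by apply/setP => z; rewrite !inE.
rewrite -SjT in hC.
case: k hk1 hkn hCk {pO FO} => [//|k] _ _ hCk.
exact: (@main R n pi pi_pos pi_mono k 0 C hC hCk).
Qed.
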